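(* Let $V$ be a finite set, $A\subseteq V$, $i\in V$, and $t_i,\lambda\in\mathbb{C}$. Then (a) $\int d\psi_i\,d\bar\psi_i\,e^{t_i\bar\psi_i\psi_i}\,\tau_A=\tau_{A\setminus\{i\}}$ if $i\in A$, and $=t_i\tau_A$ if $i\notin A$; (b) $\int d\psi_i\,d\bar\psi_i\,e^{t_i\bar\psi_i\psi_i}\,f_A^{(\lambda)}=f_{A\setminus\{i\}}^{(\lambda)}+(t_i-\lambda)\tau_{A\setminus\{i\}}$ if $i\in A$, and $=t_if_A^{(\lambda)}$ if $i\notin A$.
   Context: For each $i\in V$ let $\psi_i,\bar\psi_i$ be anticommuting generators of a Grassmann algebra over $\mathbb{C}$; $\tau_A=\prod_{j\in A}\bar\psi_j\psi_j$ ($\tau_\emptyset=1$); $f_A^{(\lambda)}=\lambda(1-|A|)\tau_A+\sum_{j\in A}\tau_{A\setminus\{j\}}-\sum_{j,k\in A,\ j\neq k}\bar\psi_j\psi_k\,\tau_{A\setminus\{j,k\}}$ (with $f_\emptyset^{(\lambda)}=\lambda$). Berezin integration over the pair at $i$: $\int d\psi_i\,d\bar\psi_i$ is linear over the subalgebra generated by the other variables, with $\int d\psi_i\,d\bar\psi_i\,\bar\psi_i\psi_i=1$ and $\int d\psi_i\,d\bar\psi_i$ of $1,\psi_i,\bar\psi_i$ equal to $0$. *)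

(* Defs.v *)
From Stdlib Require Import Reals.
From HB Require Import structures.
From mathcomp Require Import all_boot all_order all_algebra.
From mathcomp Require Import complex Rstruct.

Set Implicit Arguments.
Unset Strict Implicit.
Unset Printing Implicit Defensive.

Import Order.TTheory GRing.Theory Num.Theory.
Local Open Scope ring_scope.

Definition Cplx : fieldType := complex R.

Section Grassmann.
Variables (V : finType) (K : fieldType).

(* Generators: (i, true) stands for psibar_i, (i, false) for psi_i. *)
Definition gen := (V * bool)%type.

(* A fixed total order on generators: psibar_i immediately precedes psi_i. *)
Definition gkey (x : gen) : nat := ((enum_rank x.1 : nat).*2 + ~~ x.2)%N.

(* Grassmann algebra: coefficients in the monomial basis e_S, where e_S is the
   product of the generators of S written in increasing gkey order. *)
Local Notation grass := {ffun {set gen} -> K^o}.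

(* e_S * e_T = msign S T * e_(S :|: T) *)
Definition msign (S T : {set gen}) : K :=
  if [disjoint S & T] then
    (-1) ^+ #|[set p : gen * gen | [&& p.1 \in S, p.2 \in T & (gkey p.2 < gkey p.1)%N]]|
  else 0.

Definition gmul (x y : grass) : grass :=
  [ffun U => \sum_(S : {set gen}) \sum_(T : {set gen} | S :|: T == U)
                msign S T * x S * y T].

Definition gone : grass := [ffun S => (S == set0)%:R].

Definition gvar (x : gen) : grass := [ffun S => (S == [set x])%:R].

Definition psi (i : V) : grass := gvar (i, false).
Definition psibar (i : V) : grass := gvar (i, true).

Definition gpow (x : grass) (n : nat) : grass := iter n (gmul x) gone.

(* Exponential; the series is finite since every element without constant
   term is nilpotent of order at most #|gen| + 1. *)
Definition gexp (x : grass) : grass :=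
  \sum_(k < (#|{: gen}|).+2) (k`!%:R)^-1 *: gpow x k.

Definition tau (A : {set V}) : grass :=
  \big[gmul/gone]_(j in A) gmul (psibar j) (psi j).

Definition fA (lam : K) (A : {set V}) : grass :=
  (lam * (1 - #|A|%:R)) *: tau A
  + \sum_(j in A) tau (A :\ j)
  - \sum_(j in A) \sum_(k in A | k != j)
        gmul (gmul (psibar j) (psi k)) (tau (A :\ j :\ k)).

(* Berezin integration  int dpsi_i dpsibar_i : linear over the subalgebra
   generated by the other variables (coefficients on the left), with
   int psibar_i psi_i = 1 and int of 1, psi_i, psibar_i = 0.  In the monomial
   basis (psibar_i psi_i adjacent and even): e_S |-> e_(S \ {psibar_i, psi_i})
   if S contains both, 0 otherwise. *)
Definition berezin (i : V) (x : grass) : grass :=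
  [ffun U : {set gen} => if ((i, true) \in U) || ((i, false) \in U) then 0
             else x (U :|: [set (i, true); (i, false)])].

End Grassmann.

Arguments msign {V K}.
Arguments gmul {V K}.
Arguments gone {V K}.
Arguments gvar {V K}.
Arguments psi {V K}.
Arguments psibar {V K}.
Arguments gpow {V K}.
Arguments gexp {V K}.
Arguments tau {V K}.
Arguments fA {V K}.
Arguments berezin {V K}.

(* Main.v *)
Require Import Defs.
From Stdlib Require Import Reals.
From HB Require Import structures.
From mathcomp Require Import all_boot all_order all_algebra.
From mathcomp Require Import complex Rstruct.
From mathcomp Require Import zify ring.
Import GRing.Theory.
Local Open Scope ring_scope.
Set Implicit Arguments.
Unset Strict Implicit.

Section G.
Variables (V : finType) (K : fieldType).
Local Notation gen := (gen V).
Local Notation grass := {ffun {set gen} -> K^o}.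

Definition ev (S : {set gen}) : grass := [ffun U => (U == S)%:R].
Definition cnt (S T : {set gen}) : nat :=
  #|[set p : gen * gen | [&& p.1 \in S, p.2 \in T & (gkey p.2 < gkey p.1)%N]]|.
Lemma msignE (F : fieldType) S T : @msign V F S T = if [disjoint S & T] then (-1) ^+ cnt S T else 0.
Proof. by []. Qed.

Lemma gmulE (x y : grass) U : gmul x y U =
  \sum_(S : {set gen}) \sum_(T : {set gen} | S :|: T == U) msign S T * x S * y T.
Proof. by rewrite ffunE. Qed.

Lemma gmulEv S T : gmul (ev S) (ev T) = msign S T *: ev (S :|: T).
Proof.
apply/ffunP => U; rewrite gmulE !ffunE (bigD1 S) //= [X in _ + X]big1 ?addr0; last first.
  move=> S' /negPf nS; apply: big1 => T' _; by rewrite ffunE nS mulr0 mul0r.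
rewrite big_mkcond (bigD1 T) //= [X in _ + X]big1 ?addr0; last first.
  move=> T' /negPf nT; rewrite !ffunE nT; case: ifP => _; by rewrite ?mulr0.
rewrite !ffunE !eqxx mulr1 [U == _]eq_sym.
by case: ifP => _ /=; rewrite ?scaler0.
Qed.

Lemma scaleE (a : K) (b : K^o) : a *: b = a * b.
Proof. by []. Qed.

Lemma gmulZl a (x y : grass) : gmul (a *: x) y = a *: gmul x y.
Proof.
apply/ffunP => U; rewrite !ffunE scaleE mulr_sumr; apply: eq_bigr => S _.
rewrite mulr_sumr; apply: eq_bigr => T _; rewrite !ffunE !scaleE; ring.
Qed.

Lemma gmulZr a (x y : grass) : gmul x (a *: y) = a *: gmul x y.
Proof.
apply/ffunP => U; rewrite !ffunE scaleE mulr_sumr; apply: eq_bigr => S _.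
rewrite mulr_sumr; apply: eq_bigr => T _; rewrite !ffunE !scaleE; ring.
Qed.

Lemma gmulDl (x y z : grass) : gmul (x + y) z = gmul x z + gmul y z.
Proof.
apply/ffunP => U; rewrite !ffunE -big_split; apply: eq_bigr => S _.
rewrite -big_split; apply: eq_bigr => T _; by rewrite !ffunE /= mulrDr mulrDl.
Qed.

Lemma gmul0r (x : grass) : gmul x 0 = 0.
Proof.
apply/ffunP => U; rewrite !ffunE big1 // => S _; apply: big1 => T _.
by rewrite ffunE mulr0.
Qed.

Lemma msign0 (F : fieldType) (T : {set gen}) : @msign V F set0 T = 1.
Proof.
rewrite msignE -setI_eq0 set0I eqxx /cnt.
rewrite (_ : [set p | _] = set0) ?cards0 // ; apply/setP => p; by rewrite !inE.
Qed.

Lemma msign0r (F : fieldType) (T : {set gen}) : @msign V F T set0 = 1.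
Proof.
rewrite msignE -setI_eq0 setI0 eqxx /cnt.
rewrite (_ : [set p | _] = set0) ?cards0 // ; apply/setP => p; by rewrite !inE andbF.
Qed.

Lemma gmul1l (y : grass) : gmul gone y = y.
Proof.
apply/ffunP => U; rewrite gmulE (bigD1 set0) //= [X in _ + X]big1 ?addr0; last first.
  move=> S' /negPf nS; apply: big1 => T' _; by rewrite ffunE nS mulr0 mul0r.
rewrite (bigD1 U) ?set0U //= [X in _ + X]big1 ?addr0; last first.
  by move=> T'; rewrite set0U => /andP[/eqP -> /negPf]; rewrite eqxx.
by rewrite msign0 ffunE eqxx !mul1r.
Qed.

Lemma gmul1r (y : grass) : gmul y gone = y.
Proof.
apply/ffunP => U; rewrite gmulE (bigD1 U) //= [X in _ + X]big1 ?addr0; last first.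
  move=> S' nS; rewrite big_mkcond; apply: big1 => T' _.
  case: eqP => // eU; rewrite ffunE; case: eqP => [T0|]; last by rewrite mulr0.
  by rewrite T0 setU0 in eU; rewrite eU eqxx in nS.
rewrite big_mkcond (bigD1 set0) //= setU0 eqxx [X in _ + X]big1 ?addr0; last first.
  by move=> T' /negPf nT; rewrite ffunE nT mulr0; case: ifP.
by rewrite msign0r ffunE eqxx mul1r mulr1.
Qed.

Definition Pset (C : {set V}) : {set gen} := [set x | x.1 \in C].

Lemma cntE (S T : {set gen}) : cnt S T =
  (\sum_(x : gen) \sum_(y : gen) [&& x \in S, y \in T & gkey y < gkey x])%N.
Proof.
rewrite /cnt -sum1_card pair_big /= big_mkcond /=; apply: eq_bigr => -[x y] _.
by rewrite !inE /=; case: (_ && _).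
Qed.

Lemma sum_gen_even (F : gen -> nat) :
  (forall v, F (v, true) = F (v, false)) -> ~~ odd (\sum_(x : gen) F x).
Proof.
move=> HF.
have -> : (\sum_(x : gen) F x = \sum_(v : V) \sum_(b : bool) F (v, b))%N.
  by rewrite pair_big; apply: eq_bigr => -[].
apply: (big_ind (fun n => ~~ odd n)) => //.
  by move=> a b /negPf ha /negPf hb; rewrite oddD ha hb.
by move=> v _; rewrite big_bool /= HF addnn odd_double.
Qed.

Lemma gkey_ind (v w : V) (b : bool) (c : bool) : v != w ->
  (gkey (w, b) < gkey (v, true))%N = (gkey (w, b) < gkey (v, false))%N /\
  (gkey (v, true) < gkey (w, b))%N = (gkey (v, false) < gkey (w, b))%N.
Proof.
move=> nvw; have : (enum_rank v : nat) != enum_rank w.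
  by apply/negP => /eqP /val_inj /enum_rank_inj /eqP; rewrite (negPf nvw).
rewrite /gkey /= -!muln2; case: b; lia.
Qed.

Lemma cnt_even_l (C : {set V}) (T : {set gen}) : (forall y, y \in T -> y.1 \notin C) -> ~~ odd (cnt (Pset C) T).
Proof.
move=> HT; rewrite cntE; apply: sum_gen_even => v.
apply: eq_bigr => -[w c] _; rewrite !inE /=.
case vC: (v \in C) => //=; case yT: ((w, c) \in T) => //=.
have nvw : v != w by apply/eqP => evw; move: (HT _ yT); rewrite /= -evw vC.
by case: (gkey_ind c c nvw) => ->.
Qed.

Lemma cnt_even_r (S : {set gen}) (C : {set V}) : (forall x, x \in S -> x.1 \notin C) -> ~~ odd (cnt S (Pset C)).
Proof.
move=> HS; rewrite cntE; apply: (big_ind (fun n => ~~ odd n)) => //.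
  by move=> a b /negPf ha /negPf hb; rewrite oddD ha hb.
move=> [v b] _; apply: sum_gen_even => w.
rewrite !inE /=; case xS: ((v, b) \in S) => //=; case wC: (w \in C) => //=.
have nvw : w != v by apply/eqP => evw; move: (HS _ xS); rewrite /= -evw wC.
by case: (gkey_ind b b (nvw : w != v)) => _ ->.
Qed.

Lemma cntU (S T1 T2 : {set gen}) : [disjoint T1 & T2] ->
  cnt S (T1 :|: T2) = (cnt S T1 + cnt S T2)%N.
Proof.
rewrite -setI_eq0 => /eqP dT; rewrite !cntE -big_split; apply: eq_bigr => x _.
rewrite -big_split; apply: eq_bigr => y _ /=.
rewrite inE; case: (x \in S) => //=.
case y1: (y \in T1); case y2: (y \in T2) => //=; last by rewrite addn0.
by have := congr1 (fun A : {set gen} => y \in A) dT; rewrite /= inE y1 y2 inE.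
Qed.

Lemma msign_even (F : fieldType) (S T : {set gen}) : [disjoint S & T] -> ~~ odd (cnt S T) ->
  @msign V F S T = 1.
Proof. by move=> d /negPf o; rewrite msignE d -signr_odd o. Qed.

Lemma gvar_ev x : gvar x = ev [set x] :> grass.
Proof. by []. Qed.

Lemma gone_ev : gone = ev set0 :> grass.
Proof. by []. Qed.

Lemma X_ev j : gmul (psibar j) (psi j) = ev (Pset [set j]) :> grass.
Proof.
rewrite /psibar /psi !gvar_ev gmulEv msign_even ?scale1r.
- congr ev; apply/setP => -[v b]; rewrite !inE /= !xpair_eqE; by case: b; rewrite ?andbT ?andbF ?orbF.
- rewrite -setI_eq0; apply/eqP/setP => x; rewrite !inE.
  by apply/negP => /andP[/eqP -> /eqP].
- rewrite /cnt (_ : [set p | _] = set0) ?cards0 //; apply/setP => -[x y]; rewrite !inE /=.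
  apply/negP => /and3P[/eqP -> /eqP ->]; rewrite /gkey /=; lia.
Qed.

Lemma tau_seq (s : seq V) : uniq s ->
  \big[gmul/gone]_(j <- s) gmul (psibar j) (psi j) = ev (Pset [set x in s]) :> grass.
Proof.
elim: s => [|j s IH] /=.
  move=> _; rewrite big_nil gone_ev; congr ev; apply/setP => x; by rewrite !inE.
move=> /andP[js us]; rewrite big_cons IH // X_ev gmulEv msign_even ?scale1r.
- congr ev; apply/setP => -[v b]; by rewrite !inE.
- rewrite -setI_eq0; apply/eqP/setP => x; rewrite !inE.
  by apply/negP => /andP[/eqP -> ]; rewrite (negPf js).
- apply: cnt_even_l => y; rewrite !inE; apply: contraTN => /eqP ->; exact: js.
Qed.

Lemma tau_ev (A : {set V}) : tau A = ev (Pset A) :> grass.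
Proof.
rewrite /tau -big_filter tau_seq ?filter_uniq ?index_enum_uniq //.
congr ev; apply/setP => x; by rewrite !inE mem_filter mem_index_enum andbT.
Qed.

Variable i : V.
Definition Pi : {set gen} := [set (i, true); (i, false)].
Definition hit (U : {set gen}) := ((i, true) \in U) || ((i, false) \in U).
Definition restr (Y : grass) : grass :=
  [ffun U : {set gen} => if ((i, true) \in U) || ((i, false) \in U) then 0 else Y U].

Lemma Pi_Pset : Pset [set i] = Pi.
Proof. apply/setP => -[v b]; rewrite !inE /= !xpair_eqE; by case: b; rewrite ?andbT ?andbF ?orbF. Qed.

Lemma nohit_disj U : ~~ hit U -> [disjoint Pi & U].
Proof.
rewrite /hit negb_or => /andP[h1 h2]; rewrite -setI_eq0; apply/eqP/setP => x.
rewrite !inE; apply/negP => /andP[/orP[] /eqP -> ]; by [rewrite (negPf h1) | rewrite (negPf h2)].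
Qed.

Lemma nohit_v U : ~~ hit U -> forall y, y \in U -> y.1 \notin [set i].
Proof.
rewrite /hit negb_or => /andP[h1 h2] -[v b] yU; rewrite inE /=; apply/eqP => evi.
by move: evi yU => ->; case: b; rewrite ?(negPf h1) ?(negPf h2).
Qed.

Lemma key (Y : grass) : berezin i (gmul (ev Pi) Y) = restr Y.
Proof.
apply/ffunP => U; rewrite !ffunE; case hU: (((i, true) \in (U : {set gen})) || ((i, false) \in (U : {set gen}))) => //.
have nh : ~~ hit U by rewrite /hit hU.
rewrite (bigD1 Pi) //= [X in _ + X]big1 ?addr0; last first.
  move=> S' /negPf nS; apply: big1 => T' _; by rewrite ffunE nS mulr0 mul0r.
rewrite (bigD1 U) ?(setUC Pi) //= [X in _ + X]big1 ?addr0; last first.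
  move=> T /andP[/eqP eq nTU]; rewrite msignE; case: ifP => [dj|]; last by rewrite !mul0r.
  case/eqP: nTU; apply/setP => x; have := congr1 (fun A : {set gen} => x \in A) eq.
  rewrite /= !inE; case xP: (x \in Pi).
    rewrite (disjointFr dj xP) (disjointFr (nohit_disj nh) xP) //.
  by move: xP; rewrite !inE => /norP[/negPf -> /negPf ->] /=; rewrite !orbF.
rewrite ffunE eqxx msign_even ?mulr1 ?mul1r //; first exact: nohit_disj.
rewrite -Pi_Pset; apply: cnt_even_l; exact: nohit_v.
Qed.

Lemma gpow_nil (x : grass) n : gmul x x = 0 -> gpow x n.+2 = 0.
Proof.
move=> xx; elim: n => [|n IH]; first by rewrite /gpow /= gmul1r.
by rewrite /gpow iterS -/(gpow x n.+2) IH gmul0r.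
Qed.

Lemma gexp_X (t : K) :
  gexp (t *: gmul (psibar i) (psi i)) = gone + t *: ev Pi :> grass.
Proof.
rewrite X_ev Pi_Pset /gexp !big_ord_recl [X in _ + (_ + X)]big1 ?addr0; last first.
  move=> k _; have -> : (lift ord0 (lift ord0 k) : nat) = k.+2 by [].
  rewrite gpow_nil ?scaler0 //.
  rewrite gmulZl gmulZr gmulEv msignE.
  case: ifP => [dj|]; last by rewrite !scale0r !scaler0.
  by move: (disjointFr dj (setU11 (i, true) [set (i, false)])); rewrite setU11.
have -> : (lift ord0 ord0 : nat) = 1%N by [].
by rewrite /gpow /= gmul1r invr1 !scale1r.
Qed.

Lemma berezinD (x y : grass) : berezin i (x + y) = berezin i x + berezin i y.
Proof. apply/ffunP => U; rewrite !ffunE; case: ifP => //; by rewrite addr0. Qed.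
Lemma berezinN (x : grass) : berezin i (- x) = - berezin i x.
Proof. apply/ffunP => U; rewrite !ffunE; case: ifP => //; by rewrite oppr0. Qed.
Lemma berezinB (x y : grass) : berezin i (x - y) = berezin i x - berezin i y.
Proof. by rewrite berezinD berezinN. Qed.
Lemma berezinZ a (x : grass) : berezin i (a *: x) = a *: berezin i x.
Proof. apply/ffunP => U; rewrite !ffunE; case: ifP => //; by rewrite scaler0. Qed.
Lemma berezin0 : berezin i (0 : grass) = 0.
Proof. apply/ffunP => U; rewrite !ffunE; by case: ifP. Qed.
Lemma berezin_sum (I : Type) (r : seq I) (P : pred I) (F : I -> grass) :
  berezin i (\sum_(j <- r | P j) F j) = \sum_(j <- r | P j) berezin i (F j).
Proof. exact: (big_morph _ berezinD berezin0). Qed.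

Lemma restrD (x y : grass) : restr (x + y) = restr x + restr y.
Proof. apply/ffunP => U; rewrite !ffunE; case: ifP => //; by rewrite addr0. Qed.
Lemma restrN (x : grass) : restr (- x) = - restr x.
Proof. apply/ffunP => U; rewrite !ffunE; case: ifP => //; by rewrite oppr0. Qed.
Lemma restrB (x y : grass) : restr (x - y) = restr x - restr y.
Proof. by rewrite restrD restrN. Qed.
Lemma restrZ a (x : grass) : restr (a *: x) = a *: restr x.
Proof. apply/ffunP => U; rewrite !ffunE; case: ifP => //; by rewrite scaler0. Qed.
Lemma restr0 : restr (0 : grass) = 0.
Proof. apply/ffunP => U; rewrite !ffunE; by case: ifP. Qed.
Lemma restr_sum (I : Type) (r : seq I) (P : pred I) (F : I -> grass) :
  restr (\sum_(j <- r | P j) F j) = \sum_(j <- r | P j) restr (F j).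
Proof. exact: (big_morph _ restrD restr0). Qed.

Lemma main_key (t : K) (Y : grass) :
  berezin i (gmul (gexp (t *: gmul (psibar i) (psi i))) Y) = berezin i Y + t *: restr Y.
Proof. by rewrite gexp_X gmulDl gmul1l gmulZl berezinD berezinZ key. Qed.

Lemma bz_ev_in (S : {set gen}) : Pi \subset S -> berezin i (ev S) = ev (S :\: Pi).
Proof.
move=> PS; apply/ffunP => U; rewrite !ffunE.
case: ifP => hU.
  case: eqP => // eU; move: hU; rewrite eU !inE !eqxx /=.
  by rewrite !orbT.
suff -> : (U :|: [set (i, true); (i, false)] == S) = (U == S :\: Pi) by [].
apply/eqP/eqP => [<-|->].
  apply/setP => x; rewrite !inE; move/norP: hU => [/negPf h1 /negPf h2].
  case: (x =P (i,true)) => [ex|_]; first by subst x; rewrite h1 ?eqxx /= ?eqxx.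
  case: (x =P (i,false)) => [ex|_]; first by subst x; rewrite h2 ?eqxx /= ?eqxx ?orbT.
  by rewrite /= orbF.
have s1 : (i,true) \in S by apply: (subsetP PS); rewrite !inE eqxx.
have s2 : (i,false) \in S by apply: (subsetP PS); rewrite !inE eqxx orbT.
apply/setP => x; rewrite !inE.
case: (x =P (i,true)) => [ex|_]; first by subst x; rewrite s1 orbT.
case: (x =P (i,false)) => [ex|_]; first by subst x; rewrite s2 !orbT.
by rewrite /= orbF.
Qed.

Lemma bz_ev_out (S : {set gen}) : ~~ (Pi \subset S) -> berezin i (ev S) = 0.
Proof.
move=> PS; apply/ffunP => U; rewrite !ffunE; case: ifP => // _.
case: eqP => // eU; case/negP: PS; rewrite -eU; exact: subsetUr.
Qed.

Lemma restr_ev_hit (S : {set gen}) : hit S -> restr (ev S) = 0.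
Proof.
move=> hS; apply/ffunP => U; rewrite !ffunE; case: ifP => // hU.
by case: eqP => // eU; move: hS; rewrite /hit -eU hU.
Qed.

Lemma restr_ev_nohit (S : {set gen}) : ~~ hit S -> restr (ev S) = ev S.
Proof.
move=> hS; apply/ffunP => U; rewrite !ffunE; case: ifP => // hU.
by case: eqP => // eU; move: hS; rewrite /hit -eU hU.
Qed.

Lemma Pi_sub (A : {set V}) : i \in A -> Pi \subset Pset A.
Proof. move=> iA; apply/subsetP => x; rewrite !inE => /orP[] /eqP -> //=. Qed.

Lemma PsetD (A : {set V}) : Pset A :\: Pi = Pset (A :\ i).
Proof.
apply/setP => -[v b]; rewrite !inE /= !xpair_eqE.
by case: (v =P i) => [->|_]; case: b.
Qed.

Lemma bz_tau_in (A : {set V}) : i \in A -> berezin i (tau A) = tau (A :\ i) :> grass.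
Proof. by move=> iA; rewrite !tau_ev bz_ev_in ?Pi_sub // PsetD. Qed.

Lemma bz_tau_out (A : {set V}) : i \notin A -> berezin i (tau A) = 0 :> grass.
Proof.
move=> iA; rewrite tau_ev bz_ev_out //; apply/negP => /subsetP /(_ (i, true)).
by rewrite !inE eqxx /= (negPf iA) => /(_ isT).
Qed.

Lemma restr_tau_in (A : {set V}) : i \in A -> restr (tau A) = 0 :> grass.
Proof. by move=> iA; rewrite tau_ev restr_ev_hit // /hit !inE iA. Qed.

Lemma restr_tau_out (A : {set V}) : i \notin A -> restr (tau A) = tau A :> grass.
Proof. by move=> iA; rewrite tau_ev restr_ev_nohit // /hit !inE /= (negPf iA). Qed.

Definition S0 (j k : V) : {set gen} := [set (j, true)] :|: [set (k, false)].
Definition M (A : {set V}) j k : grass :=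
  gmul (gmul (psibar j) (psi k)) (tau (A :\ j :\ k)).

Lemma Mev A j k : M A j k =
  (msign [set (j, true)] [set (k, false)] * msign (S0 j k) (Pset (A :\ j :\ k)))
    *: ev (S0 j k :|: Pset (A :\ j :\ k)).
Proof. by rewrite /M /psibar /psi !gvar_ev gmulEv tau_ev gmulZl gmulEv scalerA. Qed.

Lemma disj_S0 (B : {set V}) j k : j \notin B -> k \notin B -> [disjoint S0 j k & Pset B].
Proof.
move=> jB kB; rewrite -setI_eq0; apply/eqP/setP => x; rewrite !inE.
by apply/negP => /andP[/orP[] /eqP -> /=]; rewrite ?(negPf jB) ?(negPf kB).
Qed.

Lemma bz_M_in (A : {set V}) j k : j != i -> k != i -> i \in A ->
  berezin i (M A j k) = M (A :\ i) j k.
Proof.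
move=> ji ki iA; rewrite !Mev berezinZ bz_ev_in; last first.
  rewrite -Pi_Pset; apply/subsetP => x; rewrite !inE => /eqP -> /=.
  by rewrite iA (eq_sym i j) ji (eq_sym i k) ki orbT.
have eB : A :\ i :\ j :\ k = A :\ j :\ k :\ i.
  by apply/setP => v; rewrite !inE; do 3 case: (_ == _) => //.
rewrite eB; congr (_ *: ev _); last first.
  apply/setP => -[v b]; rewrite !inE /= !xpair_eqE.
  have ij : (i == j) = false by rewrite eq_sym (negPf ji).
  have ik : (i == k) = false by rewrite eq_sym (negPf ki).
  case: (v =P i) => [->|/eqP/negPf vi]; rewrite ?ij ?ik ?eqxx ?vi /=; by case: b.
congr (_ * _); rewrite !msignE !disj_S0 ?inE ?eqxx ?andbF //.
have -> : Pset (A :\ j :\ k) = Pset (A :\ j :\ k :\ i) :|: Pset [set i].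
  apply/setP => -[v b]; rewrite !inE /=; case: (v =P i) => [->|] //=.
  by rewrite (eq_sym i k) (negPf ki) (eq_sym i j) (negPf ji) iA.
  by rewrite orbF.
rewrite cntU; last first.
  rewrite -setI_eq0; apply/eqP/setP => x; rewrite !inE.
  by apply/negP => /andP[/andP[/negPf ->]].
rewrite -signr_odd oddD.
have /negPf -> : ~~ odd (cnt (S0 j k) (Pset [set i])).
  apply: cnt_even_r => x; rewrite !inE => /orP[] /eqP -> //=.
by rewrite addbF signr_odd.
Qed.

Lemma bz_M_zero (A : {set V}) j k : k != j -> (j == i) || (k == i) ->
  berezin i (M A j k) = 0.
Proof.
move=> kj hji; rewrite Mev berezinZ bz_ev_out ?scaler0 //.
apply/negP => /subsetP sub; move/orP: hji => [] /eqP ei; subst.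
  have := sub (i, false); rewrite !inE /= !xpair_eqE !eqxx /= => /(_ isT).
  by rewrite (eq_sym i k) (negPf kj) /=.
have := sub (i, true); rewrite !inE /= !xpair_eqE !eqxx /= => /(_ isT).
by rewrite (negPf kj) /= ?andbF.
Qed.

Lemma restr_M_in (A : {set V}) j k : i \in A -> restr (M A j k) = 0.
Proof.
move=> iA; rewrite Mev restrZ restr_ev_hit ?scaler0 // /hit !inE /= !xpair_eqE /=.
by rewrite iA; case: (i == j); case: (i == k).
Qed.

Lemma M_out (A : {set V}) j k : i \notin A -> j \in A -> k \in A ->
  berezin i (M A j k) = 0 /\ restr (M A j k) = M A j k.
Proof.
move=> iA jA kA.
have ji : (j == i) = false by apply/negbTE; apply: contraNneq iA => <-.
have ki : (k == i) = false by apply/negbTE; apply: contraNneq iA => <-.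
have nh : ~~ hit (S0 j k :|: Pset (A :\ j :\ k)).
  by rewrite /hit !inE /= !xpair_eqE (eq_sym i j) (eq_sym i k) ji ki (negPf iA) /=.
rewrite Mev berezinZ restrZ restr_ev_nohit // bz_ev_out ?scaler0 //.
apply: contra nh => /subsetP sub; rewrite /hit sub //; by rewrite !inE eqxx.
Qed.

Lemma fA_M lam (A : {set V}) : fA lam A =
  (lam * (1 - #|A|%:R)) *: tau A + \sum_(j in A) tau (A :\ j)
  - \sum_(j in A) \sum_(k in A | k != j) M A j k :> grass.
Proof. by rewrite /fA /M. Qed.
End G.

Arguments berezin : simpl never.
Arguments tau : simpl never.
Arguments gmul : simpl never.
Arguments M : simpl never.
Arguments restr : simpl never.
Arguments ev : simpl never.
Arguments gexp : simpl never.
Section G2.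
Variables (V : finType) (K : fieldType) (i : V).
Local Notation grass := {ffun {set gen V} -> K^o}.

Lemma DD (A : {set V}) (a b : V) : A :\ a :\ b = A :\ b :\ a.
Proof. by apply/setP => v; rewrite !inE; do 2 case: (_ == _) => //. Qed.

Lemma sum1_bz (A : {set V}) : i \in A ->
  berezin i (\sum_(j in A) tau (A :\ j)) = \sum_(j in A :\ i) tau (A :\ i :\ j) :> grass.
Proof.
move=> iA; rewrite berezin_sum (bigD1 i) //.
rewrite /= bz_tau_out ?setD11 // add0r.
apply: eq_big => [j|j /andP[jA ji]]; first by rewrite in_setD1 andbC.
by rewrite bz_tau_in 1?DD // in_setD1 eq_sym ji.
Qed.

Lemma sum2_bz (A : {set V}) : i \in A ->
  berezin i (\sum_(j in A) \sum_(k in A | k != j) M K A j k) =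
  \sum_(j in A :\ i) \sum_(k in A :\ i | k != j) M K (A :\ i) j k :> grass.
Proof.
move=> iA; rewrite berezin_sum (bigD1 i) //= berezin_sum [X in X + _]big1 ?add0r; last first.
  by move=> k /andP[_ ki]; rewrite (bz_M_zero K) ?eqxx.
apply: eq_big => [j|j /andP[jA ji]]; first by rewrite in_setD1 andbC.
rewrite berezin_sum (bigD1 i) /=; last by rewrite iA eq_sym ji.
have ij : i != j by rewrite eq_sym.
rewrite (@bz_M_zero V K i A j i ij) ?eqxx ?orbT // add0r.
apply: eq_big => [k|k /andP[/andP[kA kj] ki]]; first by rewrite in_setD1 andbC andbA.
by rewrite (bz_M_in K).
Qed.

Lemma sum1_restr (A : {set V}) : i \in A ->
  restr i (\sum_(j in A) tau (A :\ j)) = tau (A :\ i) :> grass.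
Proof.
move=> iA; rewrite restr_sum (bigD1 i) //= restr_tau_out ?setD11 // big1 ?addr0 //.
by move=> j /andP[jA ji]; rewrite restr_tau_in // in_setD1 eq_sym ji.
Qed.

Lemma sum2_restr (A : {set V}) : i \in A ->
  restr i (\sum_(j in A) \sum_(k in A | k != j) M K A j k) = 0 :> grass.
Proof.
move=> iA; rewrite restr_sum big1 // => j _; rewrite restr_sum big1 // => k _.
exact: (restr_M_in K).
Qed.


Lemma partA (A : {set V}) (t : K) :
  berezin i (gmul (gexp (t *: gmul (psibar i) (psi i))) (tau A))
     = if i \in A then tau (A :\ i) else t *: tau A :> grass.
Proof.
rewrite main_key; case: ifP => iA.
  by rewrite bz_tau_in // restr_tau_in // scaler0 addr0.
by rewrite bz_tau_out ?iA // restr_tau_out ?iA // add0r.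
Qed.

Lemma partB (A : {set V}) (t lam : K) :
  berezin i (gmul (gexp (t *: gmul (psibar i) (psi i))) (fA lam A))
     = if i \in A then fA lam (A :\ i) + (t - lam) *: tau (A :\ i)
       else t *: fA lam A :> grass.
Proof.
rewrite main_key !fA_M; case: ifP => iA.
  rewrite berezinB berezinD berezinZ bz_tau_in // sum1_bz // sum2_bz //.
  rewrite restrB restrD restrZ restr_tau_in // sum1_restr // sum2_restr //.
  rewrite scaler0 add0r subr0 (cardsD1 i A) iA.
  apply/ffunP => U; rewrite !ffunE !scaleE natrD /=; ring.
rewrite berezinB berezinD berezinZ bz_tau_out ?iA // scaler0 add0r.
rewrite berezin_sum big1 => [|j jA]; last first.
  by rewrite bz_tau_out // in_setD1 iA andbF.
rewrite berezin_sum big1 => [|j jA]; last first.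
  rewrite berezin_sum big1 // => k /andP[kA _].
  by case: (M_out K (j := j) (k := k) (negbT iA) jA kA).
rewrite subr0 add0r.
rewrite restrB restrD restrZ restr_tau_out ?iA // restr_sum restr_sum.
congr (_ *: (_ + _ - _)).
  by apply: eq_bigr => j jA; rewrite restr_tau_out // in_setD1 iA andbF.
apply: eq_bigr => j jA; rewrite restr_sum; apply: eq_bigr => k /andP[kA _].
by case: (M_out K (j := j) (k := k) (negbT iA) jA kA).
Qed.
End G2.


Theorem lemma5p1 (V : finType) (A : {set V}) (i : V) (t lam : Cplx) :
  (berezin i (gmul (gexp (t *: gmul (psibar i) (psi i))) (tau A))
     = if i \in A then tau (A :\ i) else t *: tau A)
  /\
  (berezin i (gmul (gexp (t *: gmul (psibar i) (psi i))) (fA lam A))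
     = if i \in A then fA lam (A :\ i) + (t - lam) *: tau (A :\ i)
       else t *: fA lam A).
Proof. split; [exact: partA | exact: partB]. Qed.
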